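(* Let $N, M \ge 1$ be integers, let $t_1,\ldots,t_N$ be real time points and $f_1,\ldots,f_M$ real frequencies, and let $B\in\mathbb{C}^{N\times M}$ have entries $B_{k,m}=\exp(-i2\pi f_m t_k)$. Let $A=\left[\mathbf{1}_N\ \ \mathrm{Re}(B)\ \ \mathrm{Im}(B)\right]\in\mathbb{R}^{N\times(2M+1)}$, where $\mathbf{1}_N$ is the all-ones column vector. Let $\sigma^2>0$, let $\alpha_0,\alpha_1,\ldots,\alpha_M>0$, and let $\Gamma=\mathrm{diag}(\alpha_0,\alpha_1,\ldots,\alpha_M,\alpha_1,\ldots,\alpha_M)$. Let $\Omega=\{1,\ldots,N\}$. For $J\subseteq\Omega$ let $P_J\in\mathbb{R}^{N\times N}$ be the diagonal matrix with $(P_J)_{kk}=1$ if $k\in J$ and $0$ otherwise, and define the set function $f:2^\Omega\to\mathbb{R}$ by $$f(J)=\mathrm{tr}\left(\sigma^2 I_N + A\Gamma A^T\right)-\mathrm{tr}\left(\sigma^2 I_N + A\left(\tfrac{1}{\sigma^2}A^TP_JA+\Gamma^{-1}\right)^{-1}A^T\right).$$ Then $f$ is a weakly submodular set function; that is, $f$ is monotone non-decreasing (i.e. $f(\mathcal{X})\le f(\mathcal{Y})$ whenever $\mathcal{X}\subseteq\mathcal{Y}\subseteq\Omega$) and its weak-submodularity constant $$c_f=\max_{(\mathcal{X},\mathcal{Y},i)\in\tilde\Omega} \frac{f_i(\mathcal{Y})}{f_i(\mathcal{X})},\qquad \tilde\Omega=\{(\mathcal{X},\mathcal{Y},i): \mathcal{X}\subseteq\mathcal{Y}\subset\Omega,\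 i\in\Omega\setminus\mathcal{Y}\},$$ is bounded (a finite real number), where $f_i(\mathcal{X})=f(\mathcal{X}\cup\{i\})-f(\mathcal{X})$.
   Context: $\mathrm{Re}(B)$ and $\mathrm{Im}(B)$ denote entrywise real and imaginary parts, and $\mathrm{tr}$ is the matrix trace. $2^\Omega$ denotes the power set of $\Omega$. The marginal gain of adding $j$ to $\mathcal{X}$ is $f_j(\mathcal{X})=f(\mathcal{X}\cup\{j\})-f(\mathcal{X})$. A monotone non-decreasing set function $f$ is called weakly submodular if its weak-submodularity constant $c_f$ (defined as in the claim) is bounded; it is submodular iff $c_f\le 1$. *)

(* Defs.v *)
From HB Require Import structures.
From mathcomp Require Import all_boot all_order all_algebra.
From mathcomp Require Import all_classical all_reals all_analysis.
Set Implicit Arguments. Unset Strict Implicit. Unset Printing Implicit Defensive.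
Import Order.TTheory GRing.Theory Num.Theory.
Local Open Scope ring_scope.

Section Defs.
Variable R : realType.

(* Re(B) and Im(B) for B_{k,m} = exp(-i 2 pi f_m t_k):
   Re = cos(2 pi f_m t_k), Im = - sin(2 pi f_m t_k). *)
Definition ReB (N M : nat) (t : 'I_N -> R) (fr : 'I_M -> R) : 'M[R]_(N, M) :=
  \matrix_(k < N, m < M) cos (2 * pi * fr m * t k).
Definition ImB (N M : nat) (t : 'I_N -> R) (fr : 'I_M -> R) : 'M[R]_(N, M) :=
  \matrix_(k < N, m < M) - sin (2 * pi * fr m * t k).

Definition Amat (N M : nat) (t : 'I_N -> R) (fr : 'I_M -> R)
  : 'M[R]_(N, 1 + (M + M)) :=
  row_mx (const_mx 1) (row_mx (ReB t fr) (ImB t fr)).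

Definition Gam (M : nat) (a0 : R) (a : 'I_M -> R) : 'M[R]_(1 + (M + M)) :=
  diag_mx (row_mx (const_mx a0 : 'rV[R]_1)
                  (row_mx (\row_(m < M) a m) (\row_(m < M) a m))).

Definition Psel (N : nat) (J : {set 'I_N}) : 'M[R]_N :=
  diag_mx (\row_(k < N) (if k \in J then 1 else 0)).

Definition fset_fun (N M : nat) (t : 'I_N -> R) (fr : 'I_M -> R)
  (s2 a0 : R) (a : 'I_M -> R) (J : {set 'I_N}) : R :=
  let A := Amat t fr in
  let G := Gam a0 a in
  \tr (s2%:M + A *m G *m A^T)
  - \tr (s2%:M + A *m invmx (s2^-1 *: (A^T *m Psel J *m A) + invmx G) *m A^T).

Definition gain (N : nat) (f : {set 'I_N} -> R) (j : 'I_N) (X : {set 'I_N}) : R :=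
  f (j |: X) - f X.

Definition monotone_nd (N : nat) (f : {set 'I_N} -> R) : Prop :=
  forall X Y : {set 'I_N}, X \subset Y -> f X <= f Y.

(* c_f = max over (X,Y,i), X ⊆ Y ⊊ Ω, i ∉ Y, of f_i(Y)/f_i(X) is a finite real:
   every ratio is a well-defined real (nonzero denominator) and they are bounded. *)
Definition weakly_submodular (N : nat) (f : {set 'I_N} -> R) : Prop :=
  monotone_nd f /\
  exists c : R, forall (X Y : {set 'I_N}) (i : 'I_N),
    X \subset Y -> Y \proper [set: 'I_N] -> i \notin Y ->
    gain f i X != 0 /\ gain f i Y / gain f i X <= c.
End Defs.

(* Main.v *)
Require Import Defs.
From HB Require Import structures.
From mathcomp Require Import all_boot all_order all_algebra.
From mathcomp Require Import all_classical all_reals all_analysis.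
From mathcomp Require Import ring lra.
Import Order.TTheory GRing.Theory Num.Theory.
Local Open Scope ring_scope.
Set Implicit Arguments. Unset Strict Implicit.

Definition qf {R : realFieldType} {n} (Q : 'M[R]_n) (x : 'rV_n) : R := (x *m Q *m x^T) 0 0.
Lemma qf_diag {R : realFieldType} {n} (d : 'rV[R]_n) x : qf (diag_mx d) x = \sum_j x 0 j ^+ 2 * d 0 j.
Proof.
rewrite /qf mul_mx_diag !mxE; apply: eq_bigr => j _; rewrite !mxE; ring.
Qed.

Section Gen.
Variable R : realFieldType.
Variable n : nat.

Definition pd (Q : 'M[R]_n) := Q^T = Q /\ forall x : 'rV[R]_n, x != 0 -> 0 < qf Q x.
Definition psd (Q : 'M[R]_n) := Q^T = Q /\ forall x : 'rV[R]_n, 0 <= qf Q x.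

Lemma pd_unit Q : pd Q -> Q \in unitmx.
Proof.
case=> _ H; rewrite unitmxE unitfE; apply/negP => /det0P [v v0 vQ].
by have := H v v0; rewrite /qf vQ mul0mx mxE ltxx.
Qed.

Lemma pd_inv Q : pd Q -> pd (invmx Q).
Proof.
move=> hQ; have U := pd_unit hQ; case: hQ => sQ H.
split; first by rewrite trmx_inv sQ.
move=> x x0; set y := x *m invmx Q.
have y0 : y != 0.
  apply: contraNneq x0 => y0.
  by rewrite -[x]mulmx1 -(mulVmx U) mulmxA -/y y0 mul0mx.
have := H y y0; rewrite /qf /y trmx_mul trmx_inv sQ -!mulmxA (mulmxA Q) mulmxV //.
by rewrite mul1mx !mulmxA.
Qed.

Lemma qfD (P Q : 'M[R]_n) x : qf (P + Q) x = qf P x + qf Q x.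
Proof. by rewrite /qf mulmxDr mulmxDl mxE. Qed.

Lemma qfZ (c : R) (Q : 'M[R]_n) x : qf (c *: Q) x = c * qf Q x.
Proof. by rewrite /qf -scalemxAr -scalemxAl mxE. Qed.

Lemma pd_psd_add P Q : pd P -> psd Q -> pd (P + Q).
Proof.
case=> sP hP [sQ hQ]; split; first by rewrite raddfD /= sP sQ.
move=> x x0; rewrite qfD; have := hP x x0; have := hQ x; lra.
Qed.

Lemma psd_scale c Q : 0 <= c -> psd Q -> psd (c *: Q).
Proof.
move=> c0 [sQ hQ]; split; first by rewrite linearZ /= sQ.
by move=> x; rewrite qfZ mulr_ge0.
Qed.


Lemma pd_diag (d : 'rV[R]_n) : (forall j, 0 < d 0 j) -> pd (diag_mx d).
Proof.
move=> hd; split; first by rewrite tr_diag_mx.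
move=> x x0; rewrite qf_diag.
have [j xj] : exists j, x 0 j != 0.
  case/boolP: [exists j, x 0 j != 0] => [/existsP //|/existsPn H].
  case/negP: x0; apply/eqP/rowP => j; rewrite mxE.
  by have := H j; rewrite negbK => /eqP.
rewrite (bigD1 j) //=.
have h1 : 0 < x 0 j ^+ 2 * d 0 j.
  by rewrite mulr_gt0 // lt0r sqrf_eq0 xj sqr_ge0.
have h2 : 0 <= \sum_(i | i != j) x 0 i ^+ 2 * d 0 i.
  by apply: sumr_ge0 => i _; rewrite mulr_ge0 ?sqr_ge0 // ltW.
lra.
Qed.

Lemma psd_gram m (B : 'M[R]_(m, n)) (d : 'rV_m) :
  (forall j, 0 <= d 0 j) -> psd (B^T *m diag_mx d *m B).
Proof.
move=> hd; split.
  by rewrite !trmx_mul trmxK tr_diag_mx mulmxA.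
move=> x; have -> : qf (B^T *m diag_mx d *m B) x =
   (x *m B^T *m diag_mx d *m (x *m B^T)^T) 0 0.
  by rewrite /qf trmx_mul trmxK !mulmxA.
change ((x *m B^T *m diag_mx d *m (x *m B^T)^T) 0 0) with (qf (diag_mx d) (x *m B^T)).
rewrite (qf_diag d (x *m B^T)); apply: sumr_ge0 => j _.
by rewrite mulr_ge0 ?sqr_ge0.
Qed.

Lemma sm Q (v : 'rV_n) c : pd Q -> 0 < c ->
  invmx (Q + c *: (v^T *m v)) =
  invmx Q - (c / (1 + c * qf (invmx Q) v)) *:
     ((v *m invmx Q)^T *m (v *m invmx Q)).
Proof.
move=> hQ c0; have U := pd_unit hQ.
have [sS hS] := pd_inv hQ.
have sQ := hQ.1.
set S := invmx Q; set s := qf S v; set u := v *m S.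
have s0 : 0 <= s.
  rewrite /s; case: (eqVneq v 0) => [->|v0]; last by apply/ltW/hS.
  by rewrite /qf !mul0mx mxE.
have hd : 1 + c * s != 0.
  have : 0 <= c * s by rewrite mulr_ge0 // ltW.
  move=> h; apply/eqP; lra.
set k := c / (1 + c * s).
set X := S - k *: (u^T *m u).
suff E : (Q + c *: (v^T *m v)) *m X = 1%:M.
  have [U' _] := mulmx1_unit E.
  by rewrite -[X]mul1mx -(mulVmx U') -mulmxA E mulmx1.
set W := v^T *m u.
have e1 : Q *m (k *: (u^T *m u)) = k *: W.
  by rewrite -scalemxAr mulmxA /u trmx_mul sS (mulmxA Q) mulmxV // mul1mx.
have e2 : c *: (v^T *m v) *m S = c *: W.
  by rewrite -scalemxAl -mulmxA.
have e3 : c *: (v^T *m v) *m (k *: (u^T *m u)) = (c * k * s) *: W.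
  rewrite -scalemxAl -scalemxAr scalerA -mulmxA (mulmxA v).
  have -> : v *m u^T = s%:M.
    rewrite [v *m u^T]mx11_scalar; congr (_%:M).
    by rewrite /u trmx_mul sS /s /qf mulmxA.
  by rewrite mul_scalar_mx -scalemxAr /W scalerA.
rewrite /X mulmxDl !mulmxBr mulmxV // e1 e2 e3.
rewrite -scalerBl -addrA -scaleNr -scalerDl.
have -> : - k + (c - c * k * s) = 0 by rewrite /k; field.
by rewrite scale0r addr0.
Qed.

End Gen.

Lemma Psel_add (R : realType) N (J : {set 'I_N}) i : i \notin J ->
  Psel R (i |: J) = Psel R J + delta_mx i i.
Proof.
move=> iJ; apply/matrixP => p q; rewrite /Psel !mxE in_setU1.
case: (eqVneq p q) => [<-|pq] /=; last first.
  rewrite !mulr0n add0r; case: (eqVneq q i) => [eqi|]; last by rewrite andbF.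
  by move: pq; rewrite eqi => /negbTE ->.
rewrite !mulr1n andbb; case: (eqVneq p i) => [->|pi] /=.
  by rewrite (negbTE iJ) add0r.
by rewrite addr0.
Qed.

Theorem theorem1 (R : realType) (N M : nat) (hN : (0 < N)%N) (hM : (0 < M)%N)
  (t : 'I_N -> R) (fr : 'I_M -> R) (s2 a0 : R) (a : 'I_M -> R)
  (hs2 : 0 < s2) (ha0 : 0 < a0) (ha : forall m, 0 < a m) :
  weakly_submodular (fset_fun t fr s2 a0 a).
Proof.
set f := fset_fun t fr s2 a0 a.
set A := Amat t fr. set G := Gam a0 a.
pose Q (J : {set 'I_N}) := s2^-1 *: (A^T *m Psel R J *m A) + invmx G.
have fE : forall J, f J = \tr (s2%:M + A *m G *m A^T)
    - \tr (s2%:M + A *m invmx (Q J) *m A^T) := fun J => erefl.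
have pdG : pd G.
  rewrite /G /Gam; apply: pd_diag => j.
  rewrite -[j]fintype.splitK; case: (fintype.split j) => k /=; first by rewrite row_mxEl mxE.
  rewrite row_mxEr -[k]fintype.splitK; case: (fintype.split k) => l /=.
    by rewrite row_mxEl mxE.
  by rewrite row_mxEr mxE.
have pdQ : forall J, pd (Q J).
  move=> J; rewrite /Q addrC; apply: pd_psd_add; first exact: pd_inv.
  apply: psd_scale; first by rewrite invr_ge0 ltW.
  rewrite /Psel; apply: psd_gram => j; rewrite mxE; by case: ifP.
have gpos : forall (J : {set 'I_N}) i, i \notin J -> 0 < f (i |: J) - f J.
  move=> J i iJ.
  have eQ : Q (i |: J) = Q J + s2^-1 *: ((row i A)^T *m row i A).
    rewrite /Q Psel_add // mulmxDr mulmxDl scalerDr addrAC.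
    by rewrite rowE trmx_mul trmx_delta !mulmxA -(mulmxA _ (delta_mx i 0)) mul_delta_mx.
  rewrite !fE eQ sm //; last by rewrite invr_gt0.
  set S := invmx (Q J); set v := row i A; set u := v *m S.
  set k := _ / _.
  rewrite mulmxBr mulmxBl !mxtraceD raddfB /= -scalemxAr -scalemxAl.
  rewrite raddfN /= mxtraceZ.
  set T := \tr (A *m (u^T *m u) *m A^T).
  suff : 0 < k * T by lra.
  have v0 : v != 0.
    apply/eqP => h.
    have := congr1 (fun m : 'rV_(1 + (M + M)) => m 0 (lshift (M + M) (0 : 'I_1))) h.
    rewrite /= /v [row _ _ _ _]mxE /A /Amat row_mxEl !mxE => /eqP; by rewrite oner_eq0.
  have s0 : 0 < qf S v by have [_ hh] := pd_inv (pdQ J); exact: hh.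
  have k0 : 0 < k.
    have : 0 < s2^-1 * qf S v by rewrite mulr_gt0 ?invr_gt0.
    rewrite /k => h; rewrite divr_gt0 ?invr_gt0 //; lra.
  have T0 : 0 < T.
    rewrite /T (_ : A *m (u^T *m u) *m A^T = (u *m A^T)^T *m (u *m A^T));
      last by rewrite [(u *m _)^T]trmx_mul trmxK !mulmxA.
    rewrite mxtrace_mulC /mxtrace big_ord1 mxE (bigD1 i) //=.
    have yi : (u *m A^T) 0 i = qf S v.
      rewrite /qf -/u !mxE; apply: eq_bigr => j _; rewrite /v !mxE.
      by [].
    have h2 : 0 <= \sum_(j | j != i) (u *m A^T) 0 j * (u *m A^T)^T j 0.
      by apply: sumr_ge0 => j _; rewrite [X in _ * X]mxE -expr2 sqr_ge0.
    rewrite [X in _ * X + _]mxE yi; have : 0 < qf S v * qf S v by rewrite mulr_gt0.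
    lra.
  exact: mulr_gt0.
split.
  move=> X Y XY.
  suff H : forall n (X' : {set 'I_N}), X' \subset Y -> (#|Y :\: X'| <= n)%N -> f X' <= f Y.
    exact: (H _ X XY (leqnn _)).
  elim=> [|n IH] X' XY'.
    rewrite leqn0 cards_eq0 finset.setD_eq0 => YX.
    by have -> : X' = Y by apply/eqP; rewrite finset.eqEsubset XY' YX.
  move=> hc; case: (set_0Vmem (Y :\: X')) => [/eqP e|[y hy]].
    move: e; rewrite finset.setD_eq0 => YX.
    by have -> : X' = Y by apply/eqP; rewrite finset.eqEsubset XY' YX.
  have yX : y \notin X' by move: hy; rewrite finset.in_setD => /andP[].
  have yY : y \in Y by move: hy; rewrite finset.in_setD => /andP[].
  have h1 := gpos X' y yX.
  have h2 : f (y |: X') <= f Y.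
    apply: IH; first by rewrite finset.subUset finset.sub1set yY XY'.
    move: hc; rewrite (cardsD1 y) hy add1n ltnS; apply: leq_trans.
    by rewrite finset.setDDl finset.setUC.
  apply: le_trans h2; rewrite -subr_ge0; exact: ltW.
exists (\sum_(p : {set 'I_N} * {set 'I_N} * 'I_N) `|gain f p.2 p.1.2 / gain f p.2 p.1.1|).
move=> X Y i XY _ iY.
have iX : i \notin X by apply: contra iY; exact: (fintype.subsetP XY).
split; first by have := gpos X i iX; rewrite lt0r => /andP[].
apply: le_trans (ler_norm _) _.
rewrite (bigD1 ((X, Y), i)) //= lerDl.
by apply: sumr_ge0 => p _; exact: normr_ge0.
Qed.
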